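(* Let $U$ be as in the context and let $\mathcal{N}_U(\mathbb{N}_1)=\{x\in\mathbb{R}_1: U^k(x)\notin\mathbb{N}_1 \text{ for all } k\in\mathbb{N}_0\}$. Suppose that for every $n\in\mathbb{N}_1$ and every real $\rho>0$ there exists $z\in(n,n+\rho)\cap\mathcal{N}_U(\mathbb{N}_1)$ such that $\mathcal{T}_U(z)\to\{1,2\}$. Then the only $U$-cycle is $(1,2,1,2,\dots)$; that is, if $x\in\mathbb{R}_1$ and $U^k(x)=x$ for some $k\ge1$, then $x\in\{1,2\}$.
   Context: $\mathbb{R}_1=\{x\ge1\}$, $\mathbb{N}_0=\{0,1,2,\dots\}$, $\mathbb{N}_1=\{1,2,\dots\}$. $U:\mathbb{R}_1\to\mathbb{R}_1$: $U(x)=x/2$ if $\lfloor x\rfloor$ is even, $U(x)=(3x+1)/2$ if $\lfloor x\rfloor$ is odd; $U^i$ is the $i$-th iterate and $\mathcal T_U(x)=(U^i(x))_{i\ge0}$. The notation $\mathcal T_U(x)\to\{1,2\}$ means $\{\lim_{k\to\infty}U^{2k}(x),\lim_{k\to\infty}U^{2k+1}(x)\}=\{1,2\}$ (both limits existing). A $U$-cycle is the trajectory of a point $z$ with $U^n(z)=z$ for some $n\ge1$. *)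

(* Defs.v *)
From Stdlib Require Import Reals ZArith.
Open Scope R_scope.

(* floor of a real: Int_part x = floor x (Stdlib: up x - 1). *)
Definition U (x : R) : R :=
  if Z.even (Int_part x) then x / 2 else (3 * x + 1) / 2.

Fixpoint Uiter (i : nat) (x : R) : R :=
  match i with
  | O => x
  | S i' => U (Uiter i' x)
  end.

Definition inN1 (y : R) : Prop := exists m : nat, (1 <= m)%nat /\ y = INR m.

Definition NU_N1 (x : R) : Prop := 1 <= x /\ forall k : nat, ~ inN1 (Uiter k x).

(* T_U(x) -> {1,2}: both limits of even/odd subsequences exist and form {1,2} *)
Definition traj_to_12 (x : R) : Prop :=
  exists a b : R,
    Un_cv (fun k => Uiter (2 * k) x) a /\
    Un_cv (fun k => Uiter (2 * k + 1) x) b /\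
    ((a = 1 /\ b = 2) \/ (a = 2 /\ b = 1)).

(* Main.v *)
Require Import Defs.
From Stdlib Require Import Reals ZArith Lia Lra.
Open Scope R_scope.

Definition sl (y : R) : R := if Z.even (Int_part y) then /2 else 3/2.
Definition cc (y : R) : R := if Z.even (Int_part y) then 0 else /2.
Definition Uz (m : Z) : Z := if Z.even m then Z.div2 m else (3 * Z.div2 m + 2)%Z.
Definition Fr (y : R) : R := y - IZR (Int_part y).

Fixpoint Lam (x : R) (i : nat) : R :=
  match i with O => 1 | S i => Lam x i * sl (Uiter i x) end.

Lemma U_aff y : U y = sl y * y + cc y.
Proof. unfold U, sl, cc; destruct (Z.even (Int_part y)); field. Qed.

Lemma sl_pos y : 0 < sl y /\ sl y <= 2.
Proof. unfold sl; destruct (Z.even (Int_part y)); lra. Qed.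

Lemma cc_prop y : 0 <= cc y /\ (cc y = 0 -> sl y = /2).
Proof. unfold sl, cc; destruct (Z.even (Int_part y)); split; lra. Qed.

Lemma U_decomp y : U y = IZR (Uz (Int_part y)) + sl y * (y - IZR (Int_part y)).
Proof.
  unfold U, sl, Uz. generalize (Int_part y) as m. intro m.
  pose proof (Z.div2_odd m) as Hm. rewrite <- Z.negb_even in Hm.
  remember (Z.div2 m) as q.
  destruct (Z.even m); cbn [Z.b2z negb] in Hm; rewrite Hm;
  rewrite ?plus_IZR, ?mult_IZR; lra.
Qed.

Lemma Int_part_spec m r : IZR m <= r < IZR m + 1 -> Int_part r = m.
Proof.
  intros [H1 H2]. destruct (base_Int_part r) as [H3 H4].
  assert (IZR (Int_part r) < IZR (m + 1)) by (rewrite plus_IZR; simpl; lra).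
  assert (IZR m < IZR (Int_part r + 1)) by (rewrite plus_IZR; simpl; lra).
  apply lt_IZR in H. apply lt_IZR in H0. lia.
Qed.

Lemma floor_max m r : IZR m <= r -> (m <= Int_part r)%Z.
Proof.
  intros H. destruct (base_Int_part r) as [H3 H4].
  assert (IZR m < IZR (Int_part r + 1)) by (rewrite plus_IZR; simpl; lra).
  apply lt_IZR in H0. lia.
Qed.

Lemma Int_part_IZR m : Int_part (IZR m) = m.
Proof. apply Int_part_spec; lra. Qed.

Lemma Fr_nonneg y : 0 <= Fr y.
Proof. unfold Fr; destruct (base_Int_part y); lra. Qed.

Lemma Fr_U y : Fr (U y) <= sl y * Fr y.
Proof.
  unfold Fr. pose proof (U_decomp y) as H. pose proof (sl_pos y).
  destruct (base_Int_part y).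
  assert (IZR (Uz (Int_part y)) <= U y) by nra.
  apply floor_max in H3. apply IZR_le in H3. lra.
Qed.

Lemma U_shift m e : 0 <= e < 1 -> U (IZR m + e) = U (IZR m) + sl (IZR m) * e.
Proof.
  intros He.
  assert (H1 : Int_part (IZR m + e) = m) by (apply Int_part_spec; lra).
  rewrite (U_decomp (IZR m + e)), (U_decomp (IZR m)). unfold sl.
  rewrite H1, Int_part_IZR. ring.
Qed.

Lemma Uiter_add i j y : Uiter (i + j) y = Uiter i (Uiter j y).
Proof. induction i; simpl; congruence. Qed.

Lemma Lam_bounds x i : 0 < Lam x i <= 2 ^ i.
Proof.
  induction i; simpl; [lra|]. destruct (sl_pos (Uiter i x)).
  split; [nra|]. nra.
Qed.

Lemma Lam_lt1 x k : 1 <= x -> (1 <= k)%nat -> Uiter k x = x -> Lam x k < 1.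
Proof.
  intros Hx Hk Hc.
  assert (Inv : forall i, Lam x i * x <= Uiter i x /\
                  (Lam x i * x = Uiter i x -> Lam x i = (/2) ^ i)).
  { induction i as [|i [IH1 IH2]]; simpl.
    - split; [lra| intros; lra].
    - rewrite (U_aff (Uiter i x)).
      destruct (sl_pos (Uiter i x)) as [Hs1 Hs2].
      destruct (cc_prop (Uiter i x)) as [Hc1 Hc2].
      split; [nra|]. intros Heq.
      assert (Hc0 : cc (Uiter i x) = 0) by nra.
      assert (Lam x i * x = Uiter i x).
      { apply (Rmult_eq_reg_l (sl (Uiter i x))); nra. }
      rewrite (IH2 H), (Hc2 Hc0). ring. }
  destruct (Inv k) as [I1 I2]. rewrite Hc in I1, I2.
  destruct (Rle_lt_or_eq_dec _ _ I1) as [Hl|Heq].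
  - nra.
  - rewrite (I2 Heq). apply pow_lt_1_compat; [lra|lia].
Qed.

Lemma Fr_iter x i : Fr (Uiter i x) <= Lam x i * Fr x.
Proof.
  induction i; simpl; [lra|].
  pose proof (Fr_U (Uiter i x)). destruct (sl_pos (Uiter i x)). nra.
Qed.

Lemma pow_le1 l q : 0 <= l <= 1 -> 0 <= l ^ q <= 1.
Proof. intros H; induction q; simpl; nra. Qed.

Lemma subseq_cv u a k : (1 <= k)%nat -> Un_cv u a -> Un_cv (fun q => u (q * k)%nat) a.
Proof.
  intros Hk H eps He. destruct (H eps He) as [N HN]. exists N.
  intros q Hq. apply HN. nia.
Qed.

Theorem mainTheorem5 :
  (forall (n : nat) (rho : R), (1 <= n)%nat -> 0 < rho ->
     exists z : R, INR n < z /\ z < INR n + rho /\ NU_N1 z /\ traj_to_12 z) ->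
  forall x : R, 1 <= x ->
    (exists k : nat, (1 <= k)%nat /\ Uiter k x = x) ->
    x = 1 \/ x = 2.
Proof.
  intros Hyp x Hx [k [Hk Hc]].
  pose proof (Lam_lt1 x k Hx Hk Hc) as Hl1.
  destruct (Lam_bounds x k) as [Hl0 _].
  set (lam := Lam x k) in *.
  assert (HF : Fr x = 0).
  { pose proof (Fr_iter x k). rewrite Hc in H. pose proof (Fr_nonneg x). fold lam in H. nra. }
  assert (Hint : forall i, Uiter i x = IZR (Int_part (Uiter i x))).
  { intros i. pose proof (Fr_iter x i). rewrite HF in H.
    pose proof (Fr_nonneg (Uiter i x)). unfold Fr in *. lra. }
  assert (Hlin : forall i e, 0 <= e -> (forall j, (j <= i)%nat -> Lam x j * e < 1) ->
                  Uiter i (x + e) = Uiter i x + Lam x i * e).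
  { induction i as [|i IH]; intros e He Hj; simpl; [ring|].
    rewrite IH; [|lra|intros; apply Hj; lia].
    pose proof (Hj i ltac:(lia)). destruct (Lam_bounds x i).
    rewrite (Hint i). rewrite U_shift; [|nra]. rewrite <- (Hint i). ring. }
  assert (Hp2 : 0 < 2 ^ k) by (apply pow_lt; lra).
  assert (Hcyc : forall q e, 0 <= e < / 2 ^ k -> Uiter (q * k) (x + e) = x + lam ^ q * e).
  { induction q as [|q IH]; intros e He; simpl; [ring|].
    rewrite Uiter_add, IH; [|lra].
    pose proof (pow_le1 lam q ltac:(lra)).
    rewrite Hlin.
    - rewrite Hc. unfold lam. ring.
    - nra.
    - intros j Hj. destruct (Lam_bounds x j).
      pose proof (Rle_pow 2 j k ltac:(lra) Hj).
      assert (Hq2 : lam ^ q * e < / 2 ^ k) by nra.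
      assert (2 ^ k * (lam ^ q * e) < 1).
      { apply (Rmult_lt_compat_l (2 ^ k)) in Hq2; [|lra].
        rewrite Rinv_r in Hq2; lra. }
      nra. }
  set (m0 := Int_part x) in *.
  assert (Hxm : x = IZR m0) by exact (Hint O).
  assert (Hm1 : (1 <= m0)%Z) by (apply le_IZR; lra).
  assert (HnR : INR (Z.to_nat m0) = x) by (rewrite INR_IZR_INZ, Z2Nat.id; lia || lra).
  destruct (Hyp (Z.to_nat m0) (/ 2 ^ k) ltac:(lia) ltac:(apply Rinv_0_lt_compat; lra))
    as [z [Hz1 [Hz2 [_ [a [b [Ha [_ Hab]]]]]]]].
  rewrite HnR in Hz1, Hz2.
  pose proof (subseq_cv _ _ k Hk Ha) as Hs. simpl in Hs.
  assert (Hs2 : Un_cv (fun q => Uiter (2 * (q * k)) z) x).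
  { intros eps He.
    assert (Hl2 : Rabs (lam ^ 2) < 1).
    { rewrite Rabs_right; [|apply Rle_ge, pow_le; lra]. simpl. nra. }
    destruct (pow_lt_1_zero _ Hl2 (eps / (z - x + 1))) as [N HN].
    { apply Rdiv_lt_0_compat; lra. }
    exists N. intros q Hq.
    replace (2 * (q * k))%nat with ((2 * q) * k)%nat by lia.
    replace z with (x + (z - x)) by ring.
    rewrite Hcyc; [|lra]. unfold R_dist.
    replace (x + lam ^ (2 * q) * (z - x) - x) with ((lam ^ 2) ^ q * (z - x))
      by (rewrite <- pow_mult; ring).
    specialize (HN q Hq). rewrite Rabs_mult, (Rabs_right (z - x)) by lra.
    assert (Rabs ((lam ^ 2) ^ q) * (z - x + 1) < eps).
    { apply (Rmult_lt_compat_r (z - x + 1)) in HN; [|lra].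
      unfold Rdiv in HN. rewrite Rmult_assoc, Rinv_l in HN; lra. }
    pose proof (Rabs_pos ((lam ^ 2) ^ q)). nra. }
  pose proof (UL_sequence _ _ _ Hs Hs2). lra.
Qed.
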